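(* Let $\mathcal{R}$ be a field and $(\mathcal{C}^{\bullet},\partial)$ a bigraded cochain complex of $\mathcal{R}$-vector spaces as in the context. Then \[ B^{k}(\mathcal{C},\partial)\cong\bigoplus_{p+q=k}\mathcal{B}^{k}_{q}\cap\mathcal{C}^{p,q},\qquad Z^{k}(\mathcal{C},\partial)\cong\bigoplus_{p+q=k}\mathcal{Z}^{k}_{q}\cap\mathcal{C}^{p,q},\qquad H^{k}(\mathcal{C},\partial)\cong\bigoplus_{p+q=k}\frac{\mathcal{Z}^{k}_{q}\cap\mathcal{C}^{p,q}}{\mathcal{B}^{k}_{q}\cap\mathcal{C}^{p,q}}. \]
   Context: Setting: $\mathcal{C}^{k}=\bigoplus_{p+q=k}\mathcal{C}^{p,q}$ with $\mathcal{C}^{p,q}=\{0\}$ if $p<0$ or $q<0$; $\partial$ is linear of degree $1$, $\partial^{2}=0$, $\partial=\partial_{2,-1}+\partial_{1,0}+\partial_{0,1}$ with $\partial_{i,j}(\mathcal{C}^{p,q})\subseteq\mathcal{C}^{p+i,q+j}$. $G^{q}\mathcal{C}:=\bigoplus_{j\geq q}\mathcal{C}^{i,j}$ and $\pi_{q}:\mathcal{C}\to G^{q}\mathcal{C}$ is the projection along the bigrading. $\mathcal{N}^{p,q}:=\ker(\partial_{0,1}|_{\mathcal{C}^{p,q}})\cap\ker(\partial_{2,-1}|_{\mathcal{C}^{p,q}})$, $\mathcal{N}_{q}:=\bigoplus_{p}\mathcal{N}^{p-q,q}$ (degree-$m$ part $\mathcal{N}^{m-q,q}$), a subcomplex with differential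 $\overline{\partial}:=\partial|_{\mathcal{N}_q}$. $\mathcal{M}^{k}:=\{\eta\in\mathcal{C}^{k}\mid(\partial\eta)_{i,j}\in B^{k+1}(\mathcal{N}_{j},\overline{\partial})\ \forall\, i+j=k+1\}$, where $(\partial\eta)_{i,j}$ is the $\mathcal{C}^{i,j}$-component; $\mathcal{Z}^{k}_{q}:=\{\pi_{q}(\eta)\mid\eta\in\mathcal{M}^{k},\ \pi_{q}(\partial\eta)=0\}$; $\mathcal{B}^{k}_{q}:=\pi_{q}(B^{k}(\mathcal{C},\partial))$. *)

(* Defs.v *)
From HB Require Import structures.
From mathcomp Require Import all_boot all_order all_algebra.
Set Implicit Arguments. Unset Strict Implicit. Unset Printing Implicit Defensive.
Import Order.TTheory GRing.Theory Num.Theory.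
Local Open Scope ring_scope.

(* The total complex C = (+)_{p,q} C^{p,q} is modelled as an R-module V
   together with the family of projections e p q : V -> V onto C^{p,q}
   along the bigrading (p q : int; C^{p,q} = 0 when p < 0 or q < 0). *)

Section Bicomplex.
Variables (R : fieldType) (V : lmodType R).
Variable e : int -> int -> {linear V -> V}.
Variables d21 d10 d01 : {linear V -> V}.

Definition inC (p q : int) (x : V) : Prop := e p q x = x.
Definition inCk (k : int) (x : V) : Prop :=
  forall p q : int, p + q != k -> e p q x = 0.
Definition Dtot (x : V) : V := d21 x + d10 x + d01 x.

Record bigraded_complex : Prop := BigradedComplex {
  bc_neg : forall (p q : int) (x : V), (p < 0) || (q < 0) -> e p q x = 0;
  bc_orth : forall (p q p' q' : int) (x : V),
      e p q (e p' q' x) = if (p == p') && (q == q') then e p q x else 0;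
  bc_decomp : forall x : V, exists n : nat,
      x = \sum_(i < n) \sum_(j < n) e (nat_of_ord i)%:Z (nat_of_ord j)%:Z x;
  bc_d21 : forall (p q : int) (x : V), inC (p + 2) (q - 1) (d21 (e p q x));
  bc_d10 : forall (p q : int) (x : V), inC (p + 1) q (d10 (e p q x));
  bc_d01 : forall (p q : int) (x : V), inC p (q + 1) (d01 (e p q x));
  bc_DD : forall x : V, Dtot (Dtot x) = 0
}.

Definition Bk (k : int) (x : V) : Prop :=
  exists y, inCk (k - 1) y /\ x = Dtot y.
Definition Zk (k : int) (x : V) : Prop := inCk k x /\ Dtot x = 0.
Definition NN (p q : int) (x : V) : Prop :=
  inC p q x /\ d01 x = 0 /\ d21 x = 0.
(* B^m(N_j, \bar\partial) = \partial (N^{m-1-j, j}) (degree m-1 part of N_j) *)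
Definition BN (m j : int) (x : V) : Prop :=
  exists y, NN (m - 1 - j) j y /\ x = Dtot y.
Definition MM (k : int) (eta : V) : Prop :=
  inCk k eta /\
  forall i j : int, i + j = k + 1 -> BN (k + 1) j (e i j (Dtot eta)).
Definition inG (q : int) (y : V) : Prop :=
  forall i j : int, j < q -> e i j y = 0.
Definition is_proj (q : int) (x y : V) : Prop :=
  inG q y /\ forall i j : int, q <= j -> e i j (x - y) = 0.
Definition Zq (k q : int) (y : V) : Prop :=
  exists eta, MM k eta /\ is_proj q (Dtot eta) 0 /\ is_proj q eta y.
Definition Bq (k q : int) (y : V) : Prop :=
  exists x, Bk k x /\ is_proj q x y.
(* (+)_{p+q=k} (S q \cap C^{p,q}), realised inside C^k *)
Definition dsum (S : int -> V -> Prop) (k : int) (x : V) : Prop :=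
  inCk k x /\ forall p q : int, p + q = k -> S q (e p q x).

End Bicomplex.

Section Iso.
Variables (R : fieldType) (V : lmodType R).

Definition lin_iso (S T : V -> Prop) : Prop :=
  exists f : V -> V,
    [/\ forall (a : R) (x y : V), S x -> S y -> f (a *: x + y) = a *: f x + f y,
        forall x, S x -> T (f x),
        forall x y, S x -> S y -> f x = f y -> x = y &
        forall z, T z -> exists2 x, S x & f x = z].

(* Z/B and TZ/TB are isomorphic R-vector spaces; the isomorphism is
   described through a choice of representatives g : Z -> TZ. *)
Definition quot_iso (Z B TZ TB : V -> Prop) : Prop :=
  exists g : V -> V,
    [/\ forall x, Z x -> TZ (g x),
        forall (a : R) (x y : V), Z x -> Z y ->
          TB (g (a *: x + y) - (a *: g x + g y)),
        forall x y, Z x -> Z y -> (B (x - y) <-> TB (g x - g y)) &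
        forall z, TZ z -> exists2 x, Z x & TB (g x - z)].

End Iso.

(* Main.v *)
From HB Require Import structures.
From mathcomp Require Import all_boot all_order all_algebra.
From mathcomp Require Import zify.
From mathcomp Require classical_sets.
From Stdlib Require Import ClassicalEpsilon FunctionalExtensionality PropExtensionality.
Require Import Defs.
Import Order.TTheory GRing.Theory Num.Theory.
Set Implicit Arguments. Unset Strict Implicit.
Local Open Scope ring_scope.

Lemma section_ext (R : fieldType) (V : lmodType R) (F W0 : V -> Prop)
  (L : {linear V -> V}) :
  (forall a x y, F x -> F y -> F (a *: x + y)) ->
  W0 0 -> (forall a x y, W0 x -> W0 y -> W0 (a *: x + y)) ->
  (forall w, W0 w -> F w) ->
  (forall w, W0 w -> L w = 0 -> w = 0) ->
  exists s : V -> V,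
   [/\ (forall x, F x -> F (s (L x)) /\ L (s (L x)) = L x),
       (forall a x y, F x -> F y -> s (L (a *: x + y)) = a *: s (L x) + s (L y)) &
       (forall w, W0 w -> s (L w) = w)].
Proof.

move=> Fcl W00 W0cl W0F W0ker.
pose good (A : V -> Prop) :=
  [/\ forall w, W0 w -> A w, forall x, A x -> F x,
      forall a x y, A x -> A y -> A (a *: x + y) &
      forall w, A w -> L w = 0 -> w = 0].
pose P (A : V -> Prop) := A = (fun _ => False) \/ good A.
have [A [PA Amax]] : exists A : V -> Prop, P A /\
   (forall B, classical_sets.proper A B -> ~ P B).
  apply: classical_sets.Zorn_bigcup => Fam FamP Famtot.
  case: (classic (exists X, Fam X /\ exists x, X x)) => [[X0 [FX0 [x0 X0x0]]]|none].
    right.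
    have goodX : forall X, Fam X -> forall x, X x -> good X.
      move=> X FX x Xx; case: (FamP X FX) => // HX.
      by move: Xx; rewrite HX.
    have gX0 := goodX _ FX0 _ X0x0.
    split.
    - by move=> w W0w; exists X0 => //; case: gX0 => /(_ w W0w).
    - by move=> x [X FX Xx]; case: (goodX _ FX _ Xx) => _ /(_ x Xx).
    - move=> a x y [X FX Xx] [Y FY Yy].
      case: (Famtot X Y FX FY) => [XY|YX].
        exists Y => //; case: (goodX _ FY _ Yy) => _ _ /(_ a x y (XY _ Xx) Yy) //.
      exists X => //; case: (goodX _ FX _ Xx) => _ _ /(_ a x y Xx (YX _ Yy)) //.
    - by move=> w [X FX Xw]; case: (goodX _ FX _ Xw) => _ _ _ /(_ w Xw).
  left; apply: functional_extensionality => x.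
  apply: propositional_extensionality; split => // -[X FX Xx].
  by apply: none; exists X; split => //; exists x.
have gA : good A.
  case: PA => // A0; exfalso; apply: (Amax W0); last first.
    by right; split.
  rewrite A0; split => // H; exact: (H 0 W00).
case: gA => AW0 AF Acl Aker.
have A0 : A 0 by exact: AW0.
have uniq w w' : A w -> A w' -> L w = L w' -> w = w'.
  move=> Aw Aw' Lww'; apply/eqP; rewrite -subr_eq0; apply/eqP.
  apply: Aker; last by rewrite linearB Lww' subrr.
  have -> : w - w' = (-1) *: w' + w by rewrite scaleN1r addrC.
  by apply: Acl.
have ex x : F x -> exists w, A w /\ L w = L x.
  move=> Fx; apply: NNPP => nex.
  pose B := fun z => exists w a, A w /\ z = w + a *: x.
  apply: (Amax B); last first.
    right; split.
    - by move=> w W0w; exists w, 0; rewrite scale0r addr0; split => //; exact: AW0.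
    - move=> z [w [b [Aw ->]]]; rewrite addrC -[b *: x]addr0 -addrA add0r.
      by apply: Fcl => //; apply: AF.
    - move=> c z z' [w [b [Aw ->]]] [w' [b' [Aw' ->]]].
      exists (c *: w + w'), (c * b + b'); split; first exact: Acl.
      by rewrite scalerDr scalerDl scalerA addrACA.
    - move=> z [w [b [Aw ->]]] Lz.
      case: (eqVneq b 0) => [b0|bn0].
        by move: Lz; rewrite b0 scale0r !addr0 => /(Aker _ Aw).
      exfalso; apply: nex; exists ((- b^-1) *: w); split.
        by rewrite -[_ *: w]addr0; apply: Acl.
      move: Lz; rewrite linearD linearZ_LR => /eqP; rewrite addr_eq0 => /eqP Lw.
      rewrite linearZ_LR Lw.
      by rewrite scaleNr scalerN opprK scalerA mulVf // scale1r.
  split.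
    by move=> z Az; exists z, 0; rewrite scale0r addr0.
  move=> H; apply: nex; exists x; split => //; apply: H.
  by exists 0, 1; rewrite scale1r add0r.
pose s (y : V) := epsilon (inhabits 0) (fun w => A w /\ L w = y).
have sP x : F x -> A (s (L x)) /\ L (s (L x)) = L x.
  by move=> Fx; apply: (epsilon_spec (inhabits 0) (fun w => A w /\ L w = L x)); apply: ex.
have sU x w : F x -> A w -> L w = L x -> s (L x) = w.
  by move=> Fx Aw Lw; case: (sP x Fx) => As Ls; apply: uniq => //; rewrite Ls.
exists s; split.
- by move=> x Fx; case: (sP x Fx) => As ->; split => //; apply: AF.
- move=> a x y Fx Fy; apply: sU; first exact: Fcl.
    by apply: Acl; [case: (sP x Fx)|case: (sP y Fy)].
  by rewrite linearD linearZ_LR (sP x Fx).2 (sP y Fy).2 linearD linearZ_LR.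
- by move=> w W0w; apply: sU; [exact: W0F|exact: AW0|].
Qed.

Section Basic.
Variables (R : fieldType) (V : lmodType R).
Variable e : int -> int -> {linear V -> V}.
Variables d21 d10 d01 : {linear V -> V}.
Hypothesis H : bigraded_complex e d21 d10 d01.

Lemma e_same p q x : e p q (e p q x) = e p q x.
Proof. by rewrite (bc_orth H) !eqxx. Qed.

Lemma e_inC p q a b z : inC e a b z -> (p != a) || (q != b) -> e p q z = 0.
Proof.
rewrite /inC => <- ne; rewrite (bc_orth H).
by case: (p =P a) ne => [->|] //=; case: (q =P b) => [->|] //=; rewrite eqxx.
Qed.

Lemma e_other p q a b z : (p != a) || (q != b) -> e p q (e a b z) = 0.
Proof. by apply: e_inC; rewrite /inC e_same. Qed.

Lemma comps0 x : (forall i j, e i j x = 0) -> x = 0.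
Proof.
move=> h; case: (bc_decomp H x) => n ->.
by apply: big1 => i _; apply: big1 => j _; apply: h.
Qed.

Lemma DtotD x y : Dtot d21 d10 d01 (x + y) = Dtot d21 d10 d01 x + Dtot d21 d10 d01 y.
Proof. by rewrite /Dtot !linearD [d21 x + _ + _]addrACA (addrACA (d21 x + d10 x)). Qed.

Lemma DtotZ a x : Dtot d21 d10 d01 (a *: x) = a *: Dtot d21 d10 d01 x.
Proof. by rewrite /Dtot !linearZ_LR !scalerDr. Qed.

Lemma Dtot0 : Dtot d21 d10 d01 0 = 0.
Proof. by rewrite /Dtot !linear0 !addr0. Qed.

Lemma DtotB x y : Dtot d21 d10 d01 (x - y) = Dtot d21 d10 d01 x - Dtot d21 d10 d01 y.
Proof. by rewrite -scaleN1r addrC DtotD DtotZ scaleN1r addrC. Qed.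

Lemma DtotL a x y : Dtot d21 d10 d01 (a *: x + y) = a *: Dtot d21 d10 d01 x + Dtot d21 d10 d01 y.
Proof. by rewrite DtotD DtotZ. Qed.

Lemma inCk_lin k a x y : inCk e k x -> inCk e k y -> inCk e k (a *: x + y).
Proof. by move=> hx hy p q ne; rewrite linearD linearZ_LR hx // hy // scaler0 addr0. Qed.

Lemma inCk0 k : inCk e k 0.
Proof. by move=> p q _; rewrite linear0. Qed.

Lemma inCk_e k p q x : p + q = k -> inCk e k (e p q x).
Proof.
move=> pq a b ne; apply: e_other; rewrite -negb_and; apply/negP => /andP[/eqP ha /eqP hb].
by move: ne; rewrite ha hb pq eqxx.
Qed.

Lemma inCk_inC k p q x : p + q = k -> inC e p q x -> inCk e k x.
Proof. by rewrite /inC => pq <-; apply: inCk_e. Qed.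

Lemma inCk_D k x : inCk e k x -> inCk e (k + 1) (Dtot d21 d10 d01 x).
Proof.
move=> hx p q ne; case: (bc_decomp H x) => n ->.
pose f z := e p q (Dtot d21 d10 d01 z).
have f0 : f 0 = 0 by rewrite /f Dtot0 linear0.
have fD u v : f (u + v) = f u + f v by rewrite /f DtotD linearD.
rewrite -/(f _) (big_morph f fD f0); apply: big1 => i _.
rewrite (big_morph f fD f0); apply: big1 => j _.
case: (eqVneq ((nat_of_ord i)%:Z + (nat_of_ord j)%:Z) k) => hij; last first.
  by rewrite hx // f0.
have nb a b : a + b = k + 1 -> (p != a) || (q != b).
  move=> hab; rewrite -negb_and; apply/negP => /andP[/eqP ha /eqP hb]; move: ne.
  by rewrite ha hb hab eqxx.
rewrite /f /Dtot !linearD.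
rewrite (e_inC (bc_d21 H _ _ _)); last by apply: nb; lia.
rewrite (e_inC (bc_d10 H _ _ _)); last by apply: nb; lia.
rewrite (e_inC (bc_d01 H _ _ _)); last by apply: nb; lia.
by rewrite !addr0.
Qed.


Section Filt.
Variable k : int.
Variable S : V -> Prop.
Hypothesis S0 : S 0.
Hypothesis Slin : forall a x y, S x -> S y -> S (a *: x + y).
Hypothesis SC : forall x, S x -> inCk e k x.

Definition Fq (q : int) x := S x /\ forall i j, q < j -> e i j x = 0.
Definition Gq (q : int) y := exists x, Fq q x /\ e (k - q) q x = y.
Definition Lq (q : int) := e (k - q) q.

Lemma S_sub x y : S x -> S y -> S (x - y).
Proof. by move=> hx hy; rewrite addrC -scaleN1r; apply: Slin. Qed.

Lemma Fq0 q : Fq q 0.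
Proof. by split => // i j _; rewrite linear0. Qed.

Lemma Fq_lin q a x y : Fq q x -> Fq q y -> Fq q (a *: x + y).
Proof.
move=> [Sx hx] [Sy hy]; split; first exact: Slin.
by move=> i j qj; rewrite linearD linearZ_LR hx // hy // scaler0 addr0.
Qed.

Lemma Fq_sub q x y : Fq q x -> Fq q y -> Fq q (x - y).
Proof. by move=> hx hy; rewrite addrC -scaleN1r; apply: Fq_lin. Qed.

Lemma Fq_mono q q' x : q <= q' -> Fq q x -> Fq q' x.
Proof. by move=> le [Sx hx]; split => // i j lt; apply: hx; lia. Qed.

Lemma Gq0 q : Gq q 0.
Proof. by exists 0; split; [apply: Fq0 | rewrite linear0]. Qed.

Lemma dsum0 : dsum e Gq k 0.
Proof. by split; [apply: inCk0 | move=> p q _; rewrite linear0; apply: Gq0]. Qed.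

Lemma inCk_high x i j : inCk e k x -> `|k|%:Z < j -> e i j x = 0.
Proof.
move=> Cx lt; case: (eqVneq (i + j) k) => hij; last exact: Cx.
by apply: (bc_neg H); apply/orP; left; lia.
Qed.

Lemma Fq_top x : S x -> Fq (`|k|%:Z) x.
Proof. by move=> Sx; split => // i j lt; rewrite (inCk_high i (SC Sx) lt). Qed.


Lemma inCk_add x y : inCk e k x -> inCk e k y -> inCk e k (x + y).
Proof. by move=> hx hy; rewrite -[x]scale1r; apply: inCk_lin. Qed.

Lemma inCk_sub x y : inCk e k x -> inCk e k y -> inCk e k (x - y).
Proof. by move=> hx hy; rewrite addrC -scaleN1r; apply: inCk_lin. Qed.

Lemma Fq_add q x y : Fq q x -> Fq q y -> Fq q (x + y).
Proof. by move=> hx hy; rewrite -[x]scale1r; apply: Fq_lin. Qed.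

Variable s : int -> V -> V.
Hypothesis sP : forall q x, Fq q x -> Fq q (s q (Lq q x)) /\ Lq q (s q (Lq q x)) = Lq q x.
Hypothesis sL : forall q a x y, Fq q x -> Fq q y ->
  s q (Lq q (a *: x + y)) = a *: s q (Lq q x) + s q (Lq q y).

Lemma Fq_step (n : int) x : Fq n x -> Fq (n - 1) (x - s n (Lq n x)).
Proof.
move=> Fx; have [Fs Ls] := sP Fx.
split; first by apply: S_sub; [case: Fx | case: Fs].
move=> i j lt; rewrite linearB.
have [->|jn] : j = n \/ n < j by lia.
  case: (eqVneq i (k - n)) => [->|ne].
    by move: Ls; rewrite /Lq => ->; rewrite subrr.
  have hin : i + n != k by apply/eqP => h; move/eqP: ne; apply; lia.
  by rewrite (SC (proj1 Fx) hin) (SC (proj1 Fs) hin) subr0.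
by rewrite (proj2 Fx) // (proj2 Fs) // subr0.
Qed.

Fixpoint fm (n : nat) (x : V) : V :=
  match n with
  | 0%N => 0
  | n'.+1 => Lq n' x + fm n' (x - s n' (Lq n' x))
  end.

Lemma fm_P1 n x : Fq (n%:Z - 1) x ->
  dsum e Gq k (fm n x) /\ forall i j, n%:Z <= j -> e i j (fm n x) = 0.
Proof.
elim: n x => [|n IH] x Fx /=.
  by split; [exact: dsum0 | move=> *; rewrite linear0].
have Fn : Fq n x by apply: Fq_mono Fx; lia.
have Fx' := Fq_step Fn.
have [[Ck Gk] hi] := IH _ Fx'.
split.
  split.
    by apply: inCk_add => //; apply: inCk_e; lia.
  move=> p q pq; rewrite linearD.
  case: (eqVneq q n) => [qn|qn].
    have pn : p = k - n%:Z by lia.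
    rewrite qn pn /Lq e_same hi ?addr0 //.
    by exists x; split.
  rewrite /Lq e_other ?add0r; first exact: Gk.
  by rewrite qn orbT.
move=> i j le; rewrite linearD /Lq e_other ?hi ?addr0 //; first lia.
by apply/orP; right; apply/eqP; lia.
Qed.

Lemma fm_lin n a x y : Fq (n%:Z - 1) x -> Fq (n%:Z - 1) y ->
  fm n (a *: x + y) = a *: fm n x + fm n y.
Proof.
elim: n x y => [|n IH] x y Fx Fy /=.
  by rewrite scaler0 addr0.
have Fnx : Fq n x by apply: Fq_mono Fx; lia.
have Fny : Fq n y by apply: Fq_mono Fy; lia.
rewrite (sL _ Fnx Fny).
have -> : a *: x + y - (a *: s n (Lq n x) + s n (Lq n y)) =
   a *: (x - s n (Lq n x)) + (y - s n (Lq n y)).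
  by rewrite scalerBr opprD addrACA.
rewrite IH; try exact: Fq_step.
by rewrite /Lq linearD linearZ_LR scalerDr addrACA.
Qed.

Lemma fm_inj n x y : Fq (n%:Z - 1) x -> Fq (n%:Z - 1) y -> fm n x = fm n y -> x = y.
Proof.
elim: n x y => [|n IH] x y Fx Fy /=.
  have z0 u : Fq (0%:Z - 1) u -> u = 0.
    move=> Fu; apply: comps0 => i j.
    case: (ltP j 0) => hj; first by apply: (bc_neg H); rewrite hj orbT.
    by apply: (proj2 Fu); rewrite (lt_le_trans _ hj).
  by move=> _; rewrite (z0 _ Fx) (z0 _ Fy).
have Fnx : Fq n x by apply: Fq_mono Fx; lia.
have Fny : Fq n y by apply: Fq_mono Fy; lia.
have [_ hx] := fm_P1 (Fq_step Fnx).
have [_ hy] := fm_P1 (Fq_step Fny).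
move=> h.
have hL : Lq n x = Lq n y.
  have := congr1 (e (k - n%:Z) n) h.
  by rewrite !linearD /Lq !e_same hx ?hy // !addr0.
have E : x - s n (Lq n x) = y - s n (Lq n y).
  apply: IH; try exact: Fq_step.
  by rewrite hL; move: h; rewrite hL => /addrI.
by move: E; rewrite hL => /subIr.
Qed.

Lemma fm_surj n t : dsum e Gq k t -> (forall i j, n%:Z <= j -> e i j t = 0) ->
  exists2 x, Fq (n%:Z - 1) x & fm n x = t.
Proof.
elim: n t => [|n IH] t [Ct Gt] ht /=.
  exists 0; first exact: Fq0.
  apply/esym/comps0 => i j.
  case: (ltP j 0) => hj; first by apply: (bc_neg H); rewrite hj orbT.
  by apply: ht.
have [x0 [Fx0 Lx0]] := Gt (k - n%:Z) n%:Z (subrK _ _).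
have [y yE] : exists y, y = e (k - n%:Z) n%:Z t by exists (e (k - n%:Z) n%:Z t).
have Ct' : inCk e k (t - y).
  apply: inCk_sub => //; rewrite yE; by apply: inCk_e; rewrite subrK.
have [x' Fx' fx'] : exists2 x', Fq (n%:Z - 1) x' & fm n x' = t - y.
  apply: IH.
    split; first exact: Ct'.
    move=> p q pq; rewrite linearB.
    case: (eqVneq q n) => [qn|qn].
      have pn : p = k - n%:Z by lia.
      by rewrite qn pn yE e_same subrr; apply: Gq0.
    by rewrite yE e_other ?subr0; [apply: Gt | rewrite qn orbT].
  move=> i j le; rewrite linearB.
  have [->|jn] : j = n%:Z \/ n%:Z < j by lia.
    case: (eqVneq i (k - n%:Z)) => [->|ne]; first by rewrite yE e_same subrr.
    rewrite yE e_other; last by rewrite ne.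
    by rewrite Ct ?subr0 //; apply/eqP => h; move/eqP: ne; apply; lia.
  rewrite yE e_other; last by apply/orP; right; apply/eqP; lia.
  by rewrite ht ?subr0 //; lia.
have [Fs Ls] := sP Fx0.
have Fnx' : Fq n x' by apply: Fq_mono Fx'; lia.
have Lx'0 : Lq n x' = 0 by apply: (proj2 Fx'); lia.
have Ly : Lq n x0 = y by rewrite yE -Lx0.
exists (x' + s n y).
  by rewrite -Ly; apply: Fq_mono (Fq_add Fnx' Fs); lia.
have -> : Lq n (x' + s n y) = y by rewrite linearD Lx'0 add0r -{1}Ly Ls Ly.
by rewrite addrK fx' addrC subrK.
Qed.

End Filt.

Section Assemble.
Variable k : int.

Lemma is_proj_char x p q u : inCk e k x -> p + q = k ->
  (is_proj e q x (e p q u) <-> (forall i j, q < j -> e i j x = 0) /\ e p q x = e p q u).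
Proof.
move=> Cx pq; split.
  move=> [_ h]; split.
    move=> i j lt; have := h i j (ltW lt).
    rewrite linearB e_other ?subr0 //.
    by apply/orP; right; apply/eqP => jq; move: lt; rewrite jq ltxx.
  by have := h p q (lexx _); rewrite linearB e_same => /eqP; rewrite subr_eq0 => /eqP.
move=> [hi he]; split.
  move=> i j lt; apply: e_other; apply/orP; right; apply/eqP => jq.
  by move: lt; rewrite jq ltxx.
move=> i j le; rewrite linearB.
have [->|jn] : j = q \/ q < j by lia.
  case: (eqVneq i p) => [->|ne]; first by rewrite he e_same subrr.
  rewrite e_other; last by rewrite ne.
  by rewrite Cx ?subr0 //; apply/eqP => h; move/eqP: ne; apply; lia.
rewrite hi // e_other ?subr0 //.
by apply/orP; right; apply/eqP => jq; move: jn; rewrite jq ltxx.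
Qed.

Definition Bs x := Bk e d21 d10 d01 k x.
Definition Zs x := Zk e d21 d10 d01 k x.

Lemma Bs0 : Bs 0.
Proof. by exists 0; split; [apply: inCk0 | rewrite Dtot0]. Qed.

Lemma Bslin a x y : Bs x -> Bs y -> Bs (a *: x + y).
Proof.
move=> [x' [Cx ->]] [y' [Cy ->]]; exists (a *: x' + y'); split.
  exact: inCk_lin.
by rewrite DtotL.
Qed.

Lemma BsC x : Bs x -> inCk e k x.
Proof.
move=> [y [Cy ->]]; have := inCk_D Cy; rewrite subrK //.
Qed.

Lemma Zs0 : Zs 0.
Proof. by split; [apply: inCk0 | rewrite Dtot0]. Qed.

Lemma Zslin a x y : Zs x -> Zs y -> Zs (a *: x + y).
Proof.
move=> [Cx Dx] [Cy Dy]; split; first exact: inCk_lin.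
by rewrite DtotL Dx Dy scaler0 addr0.
Qed.

Lemma ZsC x : Zs x -> inCk e k x.
Proof. by case. Qed.

Lemma Bs_Zs x : Bs x -> Zs x.
Proof.
move=> Bx; split; first exact: BsC.
by case: Bx => y [_ ->]; apply: (bc_DD H).
Qed.

Lemma Bq_char p q u : p + q = k ->
  (Bq e d21 d10 d01 k q (e p q u) <-> Gq k Bs q (e p q u)).
Proof.
move=> pq; have pk : p = k - q by lia.
subst p.
split.
  move=> [x [Bx pr]]; have [hi he] := (is_proj_char u (BsC Bx) pq).1 pr.
  by exists x; split.
move=> [x [[Bx hi] he]]; exists x; split => //.
by apply/(is_proj_char u (BsC Bx) pq); split.
Qed.

Lemma cocycle_build eta : inCk e k eta ->
  (forall i j, i + j = k + 1 -> BN e d21 d10 d01 (k + 1) j (e i j (Dtot d21 d10 d01 eta))) ->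
  forall m : nat, exists w, [/\ inCk e k w, (forall i j, m%:Z <= j -> e i j w = 0) &
    forall i j, e i j (Dtot d21 d10 d01 w) =
      if j < m%:Z then e i j (Dtot d21 d10 d01 eta) else 0].
Proof.
move=> Ceta hBN; elim=> [|m [w [Cw hw hD]]].
  exists 0; split; [exact: inCk0 | by move=> *; rewrite linear0 |].
  move=> i j; rewrite Dtot0 linear0; case: ifP => // lt.
  by rewrite (bc_neg H) // lt orbT.
have [n [[nC _] nD]] := hBN (k + 1 - m%:Z) m%:Z (subrK _ _).
exists (w + n); split.
- apply: inCk_add => //; apply: (inCk_inC _ nC); lia.
- move=> i j le; rewrite linearD hw ?(e_inC nC) ?addr0 //; last lia.
  by apply/orP; right; apply/eqP; lia.
- move=> i j; rewrite DtotD linearD -nD hD.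
  have [lt|[eqj|gt]] : j < m%:Z \/ j = m%:Z \/ m%:Z < j by lia.
  + rewrite lt e_other ?addr0; last by apply/orP; right; apply/eqP; lia.
    by have -> : j < m.+1%:Z by lia.
  + rewrite eqj ltxx add0r.
    have -> : m%:Z < m.+1%:Z by lia.
    case: (eqVneq i (k + 1 - m%:Z)) => [->|ne]; first by rewrite e_same.
    rewrite e_other; last by rewrite ne.
    rewrite (inCk_D Ceta) //; apply/eqP => h; move/eqP: ne; apply; lia.
  + have -> : (j < m%:Z) = false by apply/negbTE; rewrite -leNgt; lia.
    have -> : (j < m.+1%:Z) = false by apply/negbTE; rewrite -leNgt; lia.
    by rewrite add0r e_other //; apply/orP; right; apply/eqP; lia.
Qed.

Lemma Zq_char p q u : p + q = k ->
  (Zq e d21 d10 d01 k q (e p q u) <-> Gq k Zs q (e p q u)).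
Proof.
move=> pq; have pk : p = k - q by lia.
subst p.
split; last first.
  move=> [x [[[Cx Dx] hi] he]]; exists x; split; [|split].
  - split => // i j _; rewrite Dx linear0; exists 0; split; last by rewrite Dtot0.
    by split; [rewrite /inC linear0 | rewrite !linear0].
  - by rewrite Dx; split => i j _; rewrite ?subr0 linear0.
  - by apply/(is_proj_char u Cx pq); split.
move=> [eta [[Ceta hBN] [[_ pD] pe]]].
have [hi he] := (is_proj_char u Ceta pq).1 pe.
case: (ltP q 0) => q0.
  rewrite (bc_neg H); last by rewrite q0 orbT.
  by exists 0; split; [split; [exact: Zs0 | by move=> *; rewrite linear0] | rewrite linear0].
have [m qm] : exists m : nat, q = m%:Z by exists `|q|%N; lia.
have [w [Cw hw hD]] := cocycle_build Ceta hBN m.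
exists (eta - w); split; last by rewrite linearB he hw ?subr0 // qm.
split; last first.
  by move=> i j lt; rewrite linearB hi // hw ?subr0 //; lia.
split; first exact: inCk_sub.
apply: comps0 => i j; rewrite DtotB linearB hD.
case: ifP => hj; first by rewrite subrr.
rewrite subr0; have := pD i j; rewrite subr0; apply.
by rewrite qm; move/negbT: hj; rewrite -leNgt.
Qed.

End Assemble.

Section Final.
Variable k : int.

Lemma sect_ex (S : V -> Prop) (S0 : S 0)
  (Slin : forall a x y, S x -> S y -> S (a *: x + y))
  (SC : forall x, S x -> inCk e k x) (W0 : int -> V -> Prop) :
  (forall q, W0 q 0) -> (forall q a x y, W0 q x -> W0 q y -> W0 q (a *: x + y)) ->
  (forall q w, W0 q w -> Fq S q w) -> (forall q w, W0 q w -> Lq k q w = 0 -> w = 0) ->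
  exists s : int -> V -> V,
    [/\ forall q x, Fq S q x -> Fq S q (s q (Lq k q x)) /\ Lq k q (s q (Lq k q x)) = Lq k q x,
        forall q a x y, Fq S q x -> Fq S q y ->
          s q (Lq k q (a *: x + y)) = a *: s q (Lq k q x) + s q (Lq k q y) &
        forall q w, W0 q w -> s q (Lq k q w) = w].
Proof.
move=> W00 W0lin W0F W0ker.
pose Spec q (s1 : V -> V) :=
  [/\ forall x, Fq S q x -> Fq S q (s1 (Lq k q x)) /\ Lq k q (s1 (Lq k q x)) = Lq k q x,
      forall a x y, Fq S q x -> Fq S q y ->
          s1 (Lq k q (a *: x + y)) = a *: s1 (Lq k q x) + s1 (Lq k q y) &
      forall w, W0 q w -> s1 (Lq k q w) = w].
have ex q : exists s1, Spec q s1.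
  apply: (@section_ext R V (Fq S q) (W0 q) (Lq k q)).
  - by move=> a x y; apply: Fq_lin.
  - exact: W00.
  - exact: W0lin.
  - exact: W0F.
  - exact: W0ker.
pose s q := epsilon (inhabits (fun v : V => v)) (Spec q).
have sS q : Spec q (s q) by apply: epsilon_spec; apply: ex.
exists s; split.
- by move=> q; case: (sS q).
- by move=> q; case: (sS q).
- by move=> q; case: (sS q).
Qed.

Lemma iso_gen (S : V -> Prop) (S0 : S 0)
  (Slin : forall a x y, S x -> S y -> S (a *: x + y))
  (SC : forall x, S x -> inCk e k x) (s : int -> V -> V)
  (sP : forall q x, Fq S q x -> Fq S q (s q (Lq k q x)) /\ Lq k q (s q (Lq k q x)) = Lq k q x)
  (sL : forall q a x y, Fq S q x -> Fq S q y ->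
          s q (Lq k q (a *: x + y)) = a *: s q (Lq k q x) + s q (Lq k q y)) :
  [/\ forall a x y, S x -> S y -> fm k s (`|k|).+1 (a *: x + y) =
          a *: fm k s (`|k|).+1 x + fm k s (`|k|).+1 y,
      forall x, S x -> dsum e (Gq k S) k (fm k s (`|k|).+1 x),
      forall x y, S x -> S y -> fm k s (`|k|).+1 x = fm k s (`|k|).+1 y -> x = y &
      forall t, dsum e (Gq k S) k t -> exists2 x, S x & fm k s (`|k|).+1 x = t].
Proof.
have FS x : S x -> Fq S ((`|k|).+1%:Z - 1) x.
  move=> Sx; have -> : (`|k|).+1%:Z - 1 = `|k|%:Z by lia.
  exact: (Fq_top SC).
split.
- by move=> a x y Sx Sy; apply: (fm_lin Slin SC sP sL); apply: FS.
- by move=> x Sx; have [] := fm_P1 S0 Slin SC sP (FS _ Sx).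
- by move=> x y Sx Sy; apply: (fm_inj S0 Slin SC sP); apply: FS.
- move=> t Tt; have [|x Fx fx] := fm_surj (n := (`|k|).+1) S0 Slin sP Tt.
    by move=> i j le; apply: (inCk_high i (proj1 Tt)); lia.
  by exists x => //; case: Fx.
Qed.

Lemma main_k :
  [/\ lin_iso (Bk e d21 d10 d01 k) (dsum e (Bq e d21 d10 d01 k) k),
      lin_iso (Zk e d21 d10 d01 k) (dsum e (Zq e d21 d10 d01 k) k) &
      quot_iso (Zk e d21 d10 d01 k) (Bk e d21 d10 d01 k)
               (dsum e (Zq e d21 d10 d01 k) k) (dsum e (Bq e d21 d10 d01 k) k)].
Proof.
have eqB : dsum e (Bq e d21 d10 d01 k) k = dsum e (Gq k (Bs k)) k.
  apply: functional_extensionality => x; apply: propositional_extensionality.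
  split => -[Cx hx]; split => // p q pq.
    by apply/(Bq_char x pq); apply: hx.
  by apply/(Bq_char x pq); apply: hx.
have eqZ : dsum e (Zq e d21 d10 d01 k) k = dsum e (Gq k (Zs k)) k.
  apply: functional_extensionality => x; apply: propositional_extensionality.
  split => -[Cx hx]; split => // p q pq.
    by apply/(Zq_char x pq); apply: hx.
  by apply/(Zq_char x pq); apply: hx.
rewrite eqB eqZ.
have [sB [sBP sBL _]] := @sect_ex (Bs k) (Bs0 k) (@Bslin k) (@BsC k) (fun _ w => w = 0)
   (fun _ => erefl) (fun q a x y hx hy => ltac:(by rewrite hx hy scaler0 addr0))
   (fun q w hw => ltac:(by rewrite hw; apply: Fq0; apply: Bs0))
   (fun q w hw _ => hw).
have sB0 q : sB q 0 = 0.
  have := sBL q 1 0 0 (Fq0 (Bs0 k) q) (Fq0 (Bs0 k) q).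
  rewrite !scale1r !addr0 !linear0 => /(congr1 (fun v => v - sB q 0)).
  by rewrite subrr addrK => <-.
pose W0 q w := exists x, Fq (Bs k) q x /\ w = sB q (Lq k q x).
have W00 q : W0 q 0.
  by exists 0; split; [apply: Fq0; apply: Bs0 | rewrite linear0 sB0].
have W0lin q a x y : W0 q x -> W0 q y -> W0 q (a *: x + y).
  move=> [x1 [F1 ->]] [x2 [F2 ->]]; exists (a *: x1 + x2); split.
    by apply: Fq_lin => //; apply: Bslin.
  by rewrite sBL.
have W0F q w : W0 q w -> Fq (Zs k) q w.
  move=> [x [Fx ->]]; have [[Bx hx] _] := sBP q x Fx.
  by split => //; apply: Bs_Zs.
have W0ker q w : W0 q w -> Lq k q w = 0 -> w = 0.
  move=> [x [Fx ->]]; have [_ ->] := sBP q x Fx => Lx.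
  by rewrite Lx sB0.
have [sZ [sZP sZL sZW]] := @sect_ex (Zs k) (Zs0 k) (@Zslin k) (@ZsC k) W0 W00 W0lin W0F W0ker.
have compat q x : Fq (Bs k) q x -> sZ q (Lq k q x) = sB q (Lq k q x).
  move=> Fx; have [_ Ls] := sBP q x Fx.
  by rewrite -{1}Ls; apply: sZW; exists x.
have fcompat n x : Fq (Bs k) (n%:Z - 1) x -> fm k sZ n x = fm k sB n x.
  elim: n x => [|n IH] x Fx //=.
  have Fn : Fq (Bs k) n x by apply: Fq_mono Fx; lia.
  rewrite compat // IH //.
  exact: (Fq_step (@Bslin k) (@BsC k) sBP Fn).
have [fBl fBm fBi fBs] := iso_gen (Bs0 k) (@Bslin k) (@BsC k) sBP sBL.
have [fZl fZm fZi fZs] := iso_gen (Zs0 k) (@Zslin k) (@ZsC k) sZP sZL.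
have FB x : Bs k x -> Fq (Bs k) ((`|k|).+1%:Z - 1) x.
  move=> Sx; have -> : (`|k|).+1%:Z - 1 = `|k|%:Z by lia.
  exact: (Fq_top (@BsC k)).
split.
- exists (fm k sB (`|k|).+1); split; [exact: fBl | exact: fBm | exact: fBi |].
  by move=> z /fBs [x Bx <-]; exists x.
- exists (fm k sZ (`|k|).+1); split; [exact: fZl | exact: fZm | exact: fZi |].
  by move=> z /fZs [x Bx <-]; exists x.
- exists (fm k sZ (`|k|).+1); split; first exact: fZm.
  + move=> a x y Zx Zy; rewrite fZl // subrr.
    by apply: dsum0; apply: Bs0.
  + move=> x y Zx Zy.
    have -> : x - y = (-1) *: y + x by rewrite scaleN1r addrC.
    have -> : fm k sZ (`|k|).+1 x - fm k sZ (`|k|).+1 y =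
              fm k sZ (`|k|).+1 ((-1) *: y + x) by rewrite fZl // scaleN1r addrC.
    have Zz : Zs k ((-1) *: y + x) by apply: Zslin.
    move: ((-1) *: y + x) Zz => z Zz; split.
      by move=> Bz; rewrite fcompat; [apply: fBm | apply: FB].
    move=> /fBs [x' Bx' fx'].
    have : fm k sZ (`|k|).+1 x' = fm k sZ (`|k|).+1 z by rewrite fcompat ?fx' //; apply: FB.
    by move/fZi => <- //; apply: Bs_Zs.
  + move=> t /fZs [x Zx <-]; exists x => //; rewrite subrr.
    by apply: dsum0; apply: Bs0.
Qed.

End Final.
End Basic.

Theorem corollary3p4 (R : fieldType) (V : lmodType R)
    (e : int -> int -> {linear V -> V}) (d21 d10 d01 : {linear V -> V}) :
  bigraded_complex e d21 d10 d01 ->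
  forall k : int,
    [/\ lin_iso (Bk e d21 d10 d01 k) (dsum e (Bq e d21 d10 d01 k) k),
        lin_iso (Zk e d21 d10 d01 k) (dsum e (Zq e d21 d10 d01 k) k) &
        quot_iso (Zk e d21 d10 d01 k) (Bk e d21 d10 d01 k)
                 (dsum e (Zq e d21 d10 d01 k) k) (dsum e (Bq e d21 d10 d01 k) k)].
Proof. by move=> H k; apply: main_k. Qed.
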